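(* Let $n$ be a positive integer and $x=(x_1,\ldots,x_n)\in C^n$. Let $|x|$ denote the number of indices $i$ such that $x_i$ is rational. Then the group of germs $G_{(nV,x)}$ is isomorphic to $\mathbb{Z}^{|x|}$.
   Context: Identify the Cantor set $C$ with $\{0,1\}^{\mathbb N}$, the set of infinite binary strings with the product topology. A point $s\in C$ is rational if it is eventually periodic, i.e. $s=Pww w\cdots$ for some finite binary string $P$ and some nonempty finite binary string $w$. For finite binary strings $P_0,\ldots,P_{n-1}$, the $n$-rectangle $(P_0,\ldots,P_{n-1})$ is $\{(P_0z_0,\ldots,P_{n-1}z_{n-1}): z_i\in C\}\subseteq C^n$ (concatenation of strings). For $n$-rectangles $D=(P_0,\ldots,P_{n-1})$, $R=(Q_0,\ldots,Q_{n-1})$, the $n$-rectangle map $\tau_{(D,R)}:D\to R$ sends $(P_0z_0,\ldots,P_{n-1}z_{n-1})\mapsto(Q_0z_0,\ldots,Q_{n-1}z_{n-1})$. A pattern is a partition of $C^n$ into finitely many $n$-rectangles. The group $nV$ consists of all homeomorphisms $f:C^n\to C^n$ for which there are a domain pattern $\{D_1,\ldots,D_k\}$ and a range pattern $\{R_1,\ldots,R_k\}$ with $f$ equal to the union of the maps $\tau_{(D_i,R_i)}$. For a group $K$ of homeomorphisms of a space $X$ and $x\in X$: $Fix_{(K,x)}=\{h\in K: h(x)=x\}$; $f\sim_x g$ if $f$ and $g$ agree on some neighborhood of $x$; $G_{(K,x)}$ is the set of $\sim_x$-classes $[h]_x$, a group under $[f]_x[g]_x=[fg]_x$. *)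

(* Defs.v *)
From HB Require Import structures.
From mathcomp Require Import all_boot all_order all_algebra.
From mathcomp Require Import all_classical all_reals all_analysis.

Set Implicit Arguments.
Unset Strict Implicit.
Unset Printing Implicit Defensive.

Import Order.TTheory GRing.Theory Num.Theory.
Local Open Scope classical_set_scope.

(* The Cantor set C = {0,1}^N with the product topology is [cantor_space]
   (= prod_topology (fun _ : nat => bool)); C^n is the product space
   {ptws 'I_n -> cantor_space}. *)

Definition Cn (n : nat) : Type := {ptws 'I_n -> cantor_space}.

Definition concat (P : seq bool) (z : cantor_space) : cantor_space :=
  fun m => if (m < size P)%N then nth false P m else z (m - size P)%N.

Definition repeat_str (w : seq bool) : cantor_space :=
  fun m => nth false w (m %% size w)%N.

Definition rational_pt (s : cantor_space) : Prop :=
  exists (P w : seq bool), w != [::] /\ s = concat P (repeat_str w).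

Definition rectangle (n : nat) := 'I_n -> seq bool.

Definition rect_set (n : nat) (D : rectangle n) : set (Cn n) :=
  [set y | exists z : 'I_n -> cantor_space, y = (fun i => concat (D i) (z i))].

Definition is_pattern (n k : nat) (Ds : 'I_k -> rectangle n) : Prop :=
  forall y : Cn n, exists! j : 'I_k, rect_set (Ds j) y.

Definition is_homeo (n : nat) (f : Cn n -> Cn n) : Prop :=
  continuous f /\
  exists g : Cn n -> Cn n, [/\ cancel f g, cancel g f & continuous g].

(* the group nV: homeomorphisms that are unions of rectangle maps
   tau_(D_j,R_j) for a domain pattern {D_j} and range pattern {R_j} *)
Definition in_nV (n : nat) (f : Cn n -> Cn n) : Prop :=
  is_homeo f /\
  exists (k : nat) (Ds Rs : 'I_k -> rectangle n),
    [/\ is_pattern Ds, is_pattern Rs &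
        forall (j : 'I_k) (z : 'I_n -> cantor_space),
          f (fun i => concat (Ds j i) (z i)) = (fun i => concat (Rs j i) (z i))].

Definition in_Fix_nV (n : nat) (x : Cn n) (f : Cn n -> Cn n) : Prop :=
  in_nV f /\ f x = x.

Definition germ_eq (n : nat) (x : Cn n) (f g : Cn n -> Cn n) : Prop :=
  \forall y \near x, f y = g y.

Definition num_rational (n : nat) (x : Cn n) : nat :=
  #|[set i : 'I_n | `[< rational_pt (x i) >]]|.

(* "G_(nV,x) is isomorphic to the additive group Z^k": there is a map phi
   from Fix_(nV,x) to Z^k (= 'rV[int]_k) inducing a well-defined injective
   map on germ classes (phi f = phi g <-> f ~_x g), which is a homomorphism
   ([f][g] = [f \o g] |-> phi f + phi g) and surjective. *)
Definition germ_group_iso_Zk (n : nat) (x : Cn n) (k : nat) : Prop :=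
  exists phi : (Cn n -> Cn n) -> 'rV[int]_k,
    [/\ forall f g, in_Fix_nV x f -> in_Fix_nV x g ->
          (phi f = phi g <-> germ_eq x f g),
        forall f g, in_Fix_nV x f -> in_Fix_nV x g ->
          phi (f \o g) = (phi f + phi g)%R &
        forall v : 'rV[int]_k, exists2 f, in_Fix_nV x f & phi f = v].

(* Main.v *)
Require Import Defs.
From HB Require Import structures.
From mathcomp Require Import all_boot all_order all_algebra.
From mathcomp Require Import all_classical all_reals all_analysis.
Set Implicit Arguments. Unset Strict Implicit. Unset Printing Implicit Defensive.
Import Order.TTheory GRing.Theory Num.Theory.
Local Open Scope classical_set_scope.
From mathcomp Require Import zify.

#[global] Instance Cn_nbhs_filter n (x : Cn n) : ProperFilter (nbhs x).
Proof. exact: nbhs_pfilter. Qed.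

Lemma prod_cvgP (I : Type) (K : I -> topologicalType)
  (F : set_system (prod_topology K)) (f : prod_topology K) : Filter F ->
  (forall i, (fun g : prod_topology K => g i) @ F --> f i) -> F --> f.
Proof.
move=> FF Hi.
have := (@cvg_sup (prod_topology K) I (fun i => Topological.class
    (initial_topology (fun f : (forall i, K i) => f i))) F f FF).2.
apply => i A /=.
move=> [B [[C Cop <-] Cf] BA].
apply: filterS BA _.
apply: (Hi i). exact: open_nbhs_nbhs.
Qed.

Definition cyl n (x : Cn n) (M : nat) : set (Cn n) :=
  [set y | forall (i : 'I_n) (m : nat), (m < M)%N -> y i m = x i m].

Lemma cyl_nbhs n (x : Cn n) M : nbhs x (cyl x M).
Proof.
have H : forall (i : 'I_n) (m : nat), \forall y \near x, y i m = x i m.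
  move=> i m.
  have c1 : continuous (fun y : Cn n => y i) := @proj_continuous _ _ i.
  have c2 : continuous (fun s : cantor_space => s m) := @proj_continuous _ _ m.
  have Hm := c2 (x i) [set x i m] ((principal_filterP _ _).2 erefl).
  exact: c1 _ _ Hm.
have := @filter_forall _ ('I_n * 'I_M)%type (fun p (y : Cn n) => y p.1 (nat_of_ord p.2) = x p.1 (nat_of_ord p.2)) _ _ (fun p => H p.1 p.2).
move=> /(_ _) HH; apply: (filterS _ HH) => y Hy i m mM; exact: (Hy (i, Ordinal mM)).
Qed.

Lemma nbhs_cyl n (x : Cn n) (U : set (Cn n)) : nbhs x U ->
  exists M, cyl x M `<=` U.
Proof.
set G := filter_from [set: nat] (cyl x).
have FG : Filter G.
  apply: filter_fromT_filter; first by exists 0%N.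
  move=> i j; exists (maxn i j) => y Hy; split => k m Hm; apply: Hy;
    rewrite leq_max Hm ?orbT //.
suff : G --> x.
  by move=> /(_ U) H /H [M _ HM]; exists M.
apply: prod_cvgP => i.
apply: prod_cvgP => m.
move=> A /= /principal_filterP Am.
exists m.+1 => // y Hy /=.
by rewrite /= Hy.
Qed.

Lemma nbI n (x : Cn n) (P Q : set (Cn n)) : nbhs x P -> nbhs x Q -> nbhs x (P `&` Q).
Proof. by move=> HP HQ; apply: filterI. Qed.

Lemma nbS n (x : Cn n) (P Q : set (Cn n)) : P `<=` Q -> nbhs x P -> nbhs x Q.
Proof. by move=> PQ HP; apply: filterS HP. Qed.

Definition shift (s : cantor_space) (k : nat) : cantor_space := fun m => s (m + k)%N.

Definition prefixb (P : seq bool) (s : cantor_space) : bool :=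
  [forall m : 'I_(size P), nth false P m == s m].

Lemma prefixbP P s : reflect (forall m, (m < size P)%N -> nth false P m = s m) (prefixb P s).
Proof.
apply: (iffP forallP) => [H m mP|H m]; first exact/eqP/(H (Ordinal mP)).
exact/eqP/H.
Qed.

Lemma concat_shift P s : prefixb P s -> concat P (shift s (size P)) = s.
Proof.
move/prefixbP => H; apply: funext => m; rewrite /concat /shift.
case: ifP => mP; first exact: H.
by rewrite subnK // leqNgt mP.
Qed.

Lemma prefix_concat P z : prefixb P (concat P z).
Proof. by apply/prefixbP => m mP; rewrite /concat mP. Qed.

Lemma shift_concat P z : shift (concat P z) (size P) = z.
Proof.
apply: funext => m; rewrite /shift /concat ifN ?addnK //.
by rewrite -leqNgt leq_addl.
Qed.

Lemma rect_setP n (D : rectangle n) (y : Cn n) :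
  rect_set D y <-> forall i, prefixb (D i) (y i).
Proof.
split.
  by case=> z ->; move=> i; exact: prefix_concat.
move=> H; exists (fun i => shift (y i) (size (D i))).
by apply: funext => i; rewrite concat_shift.
Qed.

Lemma cyl_refl n (x : Cn n) M : cyl x M x.
Proof. by []. Qed.

Lemma cyl_le n (x : Cn n) M M' : (M <= M')%N -> cyl x M' `<=` cyl x M.
Proof. by move=> MM y Hy i m mM; apply: Hy; exact: leq_trans mM MM. Qed.

Lemma continuous_cyl n (f : Cn n -> Cn n) :
  (forall y M, exists M', forall y', cyl y M' y' -> cyl (f y) M (f y')) ->
  continuous f.
Proof.
move=> H y U /nbhs_cyl [M HM].
have [M' HM'] := H y M.
apply: (filterS _ (cyl_nbhs y M')) => y' Hy'.
exact/HM/HM'.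
Qed.

Definition Rel n (x : Cn n) (f : Cn n -> Cn n) (a b : 'I_n -> nat) : Prop :=
  (forall i m, (a i <= m)%N -> x i (m - a i + b i)%N = x i m) /\
  \forall y \near x, forall i m,
     f y i m = if (m < a i)%N then x i m else y i (m - a i + b i)%N.

Lemma rel_uniq n (x : Cn n) f g a b a' b' :
  Rel x f a b -> Rel x g a' b' -> germ_eq x f g ->
  forall i, (a i + b' i = a' i + b i)%N.
Proof.
move=> [_ Hf] [_ Hg] Hfg i.
have H := nbI Hf (nbI Hg Hfg).
have [M HM] := nbhs_cyl H.
case: (eqVneq (a i + b' i)%N (a' i + b i)%N) => // Hne; exfalso.
set m := (a i + a' i + M)%N.
set p := (m - a i + b i)%N.
set q := (m - a' i + b' i)%N.
have pq : (q == p) = false.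
  apply/eqP => E; move/eqP: Hne; apply; rewrite /p /q /m in E; lia.
pose y : Cn n := fun j k => if (j == i) && (M <= k)%N then k == p else x j k.
have cy : cyl x M y.
  by move=> j k kM; rewrite /y; case: (j == i); rewrite //= leqNgt kM.
have [H1 [H2 H3]] := HM y cy.
have := H1 i m; have := H2 i m; rewrite H3 => ->.
rewrite /y eqxx /=.
have -> : (m < a' i)%N = false by rewrite /m; apply/negbTE; rewrite -leqNgt; lia.
have -> : (m < a i)%N = false by rewrite /m; apply/negbTE; rewrite -leqNgt; lia.
rewrite -/p -/q pq eqxx.
have -> : (M <= p)%N by rewrite /p /m; lia.
by have -> : (M <= q)%N by rewrite /q /m; lia.
Qed.

Definition bnd n (a : 'I_n -> nat) := (\max_i a i)%N.

Lemma bndP n (a : 'I_n -> nat) i : (a i <= bnd a)%N.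
Proof. exact: leq_bigmax. Qed.

Lemma rel_cylP n (x : Cn n) f a b : Rel x f a b ->
  exists M, forall y, cyl x M y -> forall i m,
     f y i m = if (m < a i)%N then x i m else y i (m - a i + b i)%N.
Proof. by case=> _ /nbhs_cyl. Qed.

Lemma rel_fix n (x : Cn n) f a b : Rel x f a b -> f x = x.
Proof.
move=> [Hp /nbhs_singleton H]; apply: funext => i; apply: funext => m.
rewrite H; case: ifP => // /negbT; rewrite -leqNgt; exact: Hp.
Qed.

Lemma rel_germ n (x : Cn n) f g a b a' b' :
  Rel x f a b -> Rel x g a' b' ->
  (forall i, (a i + b' i = a' i + b i)%N) -> germ_eq x f g.
Proof.
move=> [Pf Hf] [Pg Hg] E.
set B := (bnd a + bnd b + bnd a' + bnd b').+1.
rewrite /germ_eq.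
apply: (filterS _ (nbI (cyl_nbhs x B) (nbI Hf Hg))).
move=> y [cy [H1 H2]]; apply: funext => i; apply: funext => m.
rewrite H1 H2.
have Ba := bndP a i; have Bb := bndP b i; have Ba' := bndP a' i; have Bb' := bndP b' i.
have Ei := E i.
case: (ltnP m (a i)) => ma; case: (ltnP m (a' i)) => ma' //.
- rewrite cy; last by rewrite /B; lia.
  by rewrite Pg.
- rewrite cy; last by rewrite /B; lia.
  by rewrite Pf.
- by have -> : (m - a i + b i = m - a' i + b' i)%N by lia.
Qed.

Lemma rel_comp n (x : Cn n) f g a b a' b' :
  Rel x f a b -> Rel x g a' b' ->
  Rel x (f \o g) (fun i => a i + a' i)%N (fun i => b i + b' i)%N.
Proof.
move=> [Pf Hf] [Pg Hg].
have [Mf HMf] := rel_cylP (conj Pf Hf).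
have [Mg HMg] := rel_cylP (conj Pg Hg).
split.
  move=> i m Hm.
  have -> : (m - (a i + a' i) + (b i + b' i) = (m - a i + b i) - a' i + b' i)%N by lia.
  rewrite Pg; last by lia.
  by rewrite Pf; last by lia.
set B := (Mf + Mg + bnd a + bnd b + bnd a' + bnd b').+1.
apply: (filterS _ (cyl_nbhs x B)) => y cy i m.
have Ba := bndP a i; have Bb := bndP b i; have Ba' := bndP a' i; have Bb' := bndP b' i.
have cyg : cyl x Mg y by apply: cyl_le cy; rewrite /B; lia.
have cgy : cyl x Mf (g y).
  move=> j k kM; rewrite HMg //.
  have := bndP a' j; have := bndP b' j => h1 h2.
  case: ifP => // /negbT; rewrite -leqNgt => kj.
  rewrite cy; last by rewrite /B; lia.
  exact: Pg.
rewrite /= HMf // HMg //.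
case: (ltnP m (a i)) => ma.
  by have -> : (m < a i + a' i)%N by lia.
case: (ltnP m (a i + a' i)) => maa.
  case: ifP => h; first exact: Pf.
  move/negbT: h; rewrite -leqNgt => h.
  rewrite cy; last by rewrite /B; lia.
  rewrite Pg; last by lia.
  exact: Pf.
have -> : (m - a i + b i < a' i)%N = false by apply/negbTE; rewrite -leqNgt; lia.
by have -> : (m - a i + b i - a' i + b' i = m - (a i + a' i) + (b i + b' i))%N by lia.
Qed.

Definition per (s : cantor_space) (t : nat) : Prop :=
  exists K, forall k, (K <= k)%N -> s (k + t)%N = s k.

Lemma per_mulK (s : cantor_space) t K :
  (forall k, (K <= k)%N -> s (k + t)%N = s k) ->
  forall q k, (K <= k)%N -> s (k + q * t)%N = s k.
Proof.
move=> H; elim=> [|q IH] k Kk; first by rewrite mul0n addn0.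
rewrite mulSn addnA IH; first exact: H.
exact: leq_trans Kk (leq_addr _ _).
Qed.

Lemma per_mulr s t q : per s t -> per s (q * t)%N.
Proof. by case=> K HK; exists K => k Kk; exact: (per_mulK HK). Qed.

Lemma rational_per s : rational_pt s -> exists2 t, (0 < t)%N & per s t.
Proof.
case=> P [w [wn ->]].
have w0 : (0 < size w)%N by case: w wn.
exists (size w) => //; exists (size P) => k Pk.
rewrite /concat /repeat_str.
rewrite ltnNge (leq_trans Pk (leq_addr _ _)) ltnNge Pk /=.
by rewrite addnC -addnBA // modnDl.
Qed.

Lemma per_rational s t : (0 < t)%N -> per s t -> rational_pt s.
Proof.
move=> t0 [K HK].
exists (mkseq s K), (mkseq (fun m => s (K + m)%N) t); split.
  by rewrite -size_eq0 size_mkseq -lt0n.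
apply: funext => m; rewrite /concat /repeat_str !size_mkseq.
case: ifP => mK; first by rewrite nth_mkseq.
rewrite nth_mkseq ?ltn_mod //.
move/negbT: mK; rewrite -leqNgt => Km.
have e : m = (K + (m - K) %% t + (m - K) %/ t * t)%N.
  by rewrite -addnA (addnC (_ %% t)%N) -divn_eq subnKC.
by rewrite {1}e (per_mulK HK) // leq_addr.
Qed.

Lemma per_mod s p t : per s p -> per s t -> per s (t %% p)%N.
Proof.
move=> [K1 H1] [K2 H2]; exists (K1 + K2)%N => k Kk.
rewrite -(per_mulK H1 (t %/ p) (k:=(k + t %% p)%N)); last by lia.
by rewrite -addnA addnC (addnC (t %% p)%N) -divn_eq addnC H2 //; lia.
Qed.

Definition pp (s : cantor_space) : nat :=
  if pselect (exists t, (0 < t)%N && `[< per s t >]) is left H then ex_minn H else 1%N.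

Lemma pp_spec s : rational_pt s ->
  [/\ (0 < pp s)%N, per s (pp s) & forall t, per s t -> (pp s %| t)%N].
Proof.
move=> /rational_per [t0 t00 Ht0].
rewrite /pp; case: pselect => [H|H]; last first.
  by exfalso; apply: H; exists t0; rewrite t00; apply/asboolP.
case: ex_minnP => p /andP[p0 /asboolP Hp] Hmin; split => // t Ht.
rewrite /dvdn.
have := per_mod Hp Ht.
case E: (t %% p)%N => [//|r] Hr.
have : (p <= r.+1)%N by apply: Hmin; rewrite /= (asboolT Hr).
by rewrite -E leqNgt ltn_mod p0.
Qed.

Lemma pp_gt0 s : (0 < pp s)%N.
Proof.
rewrite /pp; case: pselect => // H.
by case: ex_minnP => p /andP[].
Qed.

Lemma rel_of_rect n (x : Cn n) f (D R : rectangle n) :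
  (forall i, prefixb (D i) (x i)) ->
  (forall z, f (fun i => concat (D i) (z i)) = fun i => concat (R i) (z i)) ->
  f x = x -> Rel x f (fun i => size (R i)) (fun i => size (D i)).
Proof.
move=> xj Hf fx.
have key : forall y : Cn n, (forall i, prefixb (D i) (y i)) ->
    f y = fun i => concat (R i) (shift (y i) (size (D i))).
  move=> y Hy; rewrite -Hf; congr f; apply: funext => i.
  by rewrite concat_shift.
have fxe := key x xj; rewrite fx in fxe.
have fxi : forall i m, x i m = concat (R i) (shift (x i) (size (D i))) m.
  by move=> i m; exact: (congr1 (fun y : Cn n => y i m) fxe).
split.
  move=> i m am.
  rewrite [x i m]fxi.
  by rewrite /concat ltnNge am /shift.
apply: (nbS _ (cyl_nbhs x (bnd (fun i => size (D i))).+1)) => y cy i m.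
have Hy : forall i, prefixb (D i) (y i).
  move=> i'; apply/prefixbP => m' m'D.
  rewrite cy; first by move/prefixbP: (xj i'); apply.
  exact: leq_trans m'D (leq_trans (bndP (fun i => size (D i)) i') (leqnSn _)).
rewrite key //= /concat; case: ifP => // mR.
rewrite [x i m]fxi.
by rewrite /concat mR.
Qed.

Lemma rel_of_Fix n (x : Cn n) f : in_Fix_nV x f -> exists a b, Rel x f a b.
Proof.
move=> [[_ [k [Ds [Rs [pD pR Hf]]]]] fx].
have [j [/rect_setP xj _]] := pD x.
by eexists; eexists; apply: (rel_of_rect xj (Hf j) fx).
Qed.

Lemma rel_per n (x : Cn n) f a b i : Rel x f a b ->
  per (x i) (a i - b i)%N /\ per (x i) (b i - a i)%N.
Proof.
move=> [P _]; split.
  exists (b i) => k bk.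
  case: (leqP (b i) (a i)) => ab; last by rewrite (eqnP (ltnW ab)) addn0.
  rewrite -P; last by lia.
  by congr (x i); lia.
exists (a i) => k ak.
case: (leqP (a i) (b i)) => ab; last by rewrite (eqnP (ltnW ab)) addn0.
rewrite -[in RHS]P //; congr (x i); lia.
Qed.

Definition dvec n (x : Cn n) (f : Cn n -> Cn n) : 'I_n -> int :=
  match pselect (exists ab : ('I_n -> nat) * ('I_n -> nat), Rel x f ab.1 ab.2) with
  | left H => let ab := proj1_sig (cid H) in fun i => ((ab.1 i)%:Z - (ab.2 i)%:Z)%R
  | right _ => fun _ => 0%R
  end.

Lemma dvecE n (x : Cn n) f a b : Rel x f a b ->
  forall i, dvec x f i = ((a i)%:Z - (b i)%:Z)%R.
Proof.
move=> H i; rewrite /dvec; case: pselect => [E|E]; last first.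
  by exfalso; apply: E; exists (a, b).
case: (cid E) => [[a' b'] /= H'].
have := rel_uniq H' H (nbS (fun y _ => erefl (f y)) (cyl_nbhs x 0)) i.
move=> e /=; lia.
Qed.

Lemma int_diff_eq (a b a' b' : nat) : (a + b' = a' + b)%N ->
  ((a%:Z - b%:Z) = (a'%:Z - b'%:Z))%R.
Proof. move=> e; lia. Qed.

Lemma int_diff_eq2 (a b a' b' : nat) :
  (((a + a')%N)%:Z - ((b + b')%N)%:Z = (a%:Z - b%:Z) + (a'%:Z - b'%:Z))%R.
Proof. lia. Qed.

Lemma dvd_diff (p a b : nat) : (p %| a - b)%N -> (p %| b - a)%N ->
  (p%:Z %| (a%:Z - b%:Z)%R)%Z.
Proof.
move=> h1 h2; rewrite dvdzE.
have -> : `|(a%:Z - b%:Z)%R|%N = (a - b + (b - a))%N by lia.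
by rewrite dvdn_add.
Qed.

Lemma rel_dvd n (x : Cn n) f a b i : Rel x f a b -> rational_pt (x i) ->
  ((pp (x i))%:Z %| ((a i)%:Z - (b i)%:Z)%R)%Z.
Proof.
move=> H /pp_spec [_ _ Hd]; have [h1 h2] := rel_per i H.
by apply: dvd_diff; apply: Hd.
Qed.

Lemma rel_nonrat n (x : Cn n) f a b i : Rel x f a b -> ~ rational_pt (x i) ->
  a i = b i.
Proof.
move=> H nr; have [h1 h2] := rel_per i H.
case: (ltngtP (a i) (b i)) => // ab; exfalso; apply: nr.
  by apply: (per_rational _ h2); rewrite subn_gt0.
by apply: (per_rational _ h1); rewrite subn_gt0.
Qed.


Definition code (T : finType) (dom : T -> seq bool) :=
  forall s : cantor_space, exists! t, prefixb (dom t) s.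

Definition hmap (T : finType) (dom ran : T -> seq bool) (s : cantor_space) : cantor_space :=
  if [pick t | prefixb (dom t) s] is Some t then concat (ran t) (shift s (size (dom t)))
  else s.

Lemma hmapE (T : finType) (dom : T -> seq bool) s t (ran : T -> seq bool) : code dom ->
  prefixb (dom t) s -> hmap dom ran s = concat (ran t) (shift s (size (dom t))).
Proof.
move=> c Ht; rewrite /hmap; case: pickP => [t' Ht'|/(_ t)]; last by rewrite Ht.
have [t0 [_ U]] := c s.
by rewrite -(U _ Ht) (U _ Ht').
Qed.

Lemma hmapK (T : finType) (dom ran : T -> seq bool) : code dom -> code ran ->
  cancel (hmap dom ran) (hmap ran dom).
Proof.
move=> cd cr s; have [t [Ht _]] := cd s.
rewrite (hmapE _ cd Ht) (hmapE _ cr (prefix_concat _ _)) shift_concat.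
exact: concat_shift.
Qed.

Lemma hmap_concat (T : finType) (dom ran : T -> seq bool) t z : code dom ->
  hmap dom ran (concat (dom t) z) = concat (ran t) z.
Proof. by move=> cd; rewrite (hmapE _ cd (prefix_concat _ _)) shift_concat. Qed.

Definition nmap n (T : 'I_n -> finType) (dom ran : forall i, T i -> seq bool)
  (y : Cn n) : Cn n := fun i => hmap (dom i) (ran i) (y i).

Lemma code_pattern n (T : 'I_n -> finType) (D : forall i, T i -> seq bool) :
  (forall i, code (D i)) ->
  is_pattern (fun j : 'I_#|{: {dffun forall i, T i}}| => fun i => D i (enum_val j i)).
Proof.
move=> cD y.
have H : forall i, exists t, prefixb (D i t) (y i).
  by move=> i; have [t [Ht _]] := cD i (y i); exists t.
pose g i := proj1_sig (cid (H i)).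
have gP : forall i, prefixb (D i (g i)) (y i) by move=> i; exact: (proj2_sig (cid (H i))).
pose F0 : {dffun forall i, T i} := [ffun i => g i].
exists (enum_rank F0); split.
  by apply/rect_setP => i /=; rewrite enum_rankK ffunE.
move=> j /rect_setP Hj.
apply: enum_val_inj; rewrite enum_rankK; apply/ffunP => i.
rewrite ffunE; have [t [_ U]] := cD i (y i).
by rewrite -(U _ (Hj i)) (U _ (gP i)).
Qed.

Lemma nmap_continuous n (T : 'I_n -> finType) (dom ran : forall i, T i -> seq bool) :
  (forall i, code (dom i)) -> continuous (nmap dom ran).
Proof.
move=> cd; apply: continuous_cyl => y M.
pose B := (\max_(i < n) \max_(t : T i) size (dom i t))%N.
have BP : forall i t, (size (dom i t) <= B)%N.
  move=> i t.
  have h1 := @leq_bigmax _ (fun t => size (dom i t)) t.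
  have h2 := @leq_bigmax _ (fun i => \max_(t : T i) size (dom i t))%N i.
  exact: leq_trans h1 h2.
exists (M + B)%N => y' cy' i m mM.
have [t [Ht _]] := cd i (y i).
have Ht' : prefixb (dom i t) (y' i).
  apply/prefixbP => m' m'D; rewrite cy'; first by move/prefixbP: Ht; apply.
  by have := BP i t; lia.
rewrite /nmap (hmapE _ (cd i) Ht) (hmapE _ (cd i) Ht') /concat /shift.
case: ifP => // _; rewrite cy' //.
by have := BP i t; lia.
Qed.

Lemma nmap_nV n (T : 'I_n -> finType) (dom ran : forall i, T i -> seq bool) :
  (forall i, code (dom i)) -> (forall i, code (ran i)) -> in_nV (nmap dom ran).
Proof.
move=> cd cr; split.
  split; first exact: nmap_continuous.
  exists (nmap ran dom); split.
  - by move=> y; apply: funext => i; rewrite /nmap hmapK.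
  - by move=> y; apply: funext => i; rewrite /nmap hmapK.
  - exact: nmap_continuous.
exists #|{: {dffun forall i, T i}}|.
exists (fun j : 'I_#|{: {dffun forall i, T i}}| => fun i => dom i (enum_val j i)).
exists (fun j : 'I_#|{: {dffun forall i, T i}}| => fun i => ran i (enum_val j i)).
split; [exact: code_pattern | exact: code_pattern |].
move=> j z; apply: funext => i.
by rewrite /nmap hmap_concat.
Qed.

Lemma nmap_rel n (x : Cn n) (T : 'I_n -> finType) (dom ran : forall i, T i -> seq bool)
  (t0 : forall i, T i) :
  (forall i, code (dom i)) ->
  (forall i, prefixb (dom i (t0 i)) (x i)) ->
  (forall i, concat (ran i (t0 i)) (shift (x i) (size (dom i (t0 i)))) = x i) ->
  Rel x (nmap dom ran) (fun i => size (ran i (t0 i))) (fun i => size (dom i (t0 i))).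
Proof.
move=> cd px fx; apply: rel_of_rect => //.
  by move=> z; apply: funext => i; rewrite /nmap hmap_concat.
by apply: funext => i; rewrite /nmap (hmapE _ (cd i) (px i)).
Qed.

Lemma nth_piece (g : nat -> bool) j b (u : seq bool) m :
  nth false (rcons (mkseq g j) b ++ u) m =
  if (m < j)%N then g m else if m == j then b else nth false u (m - j.+1).
Proof.
rewrite nth_cat size_rcons size_mkseq nth_rcons size_mkseq.
case: (ltngtP m j) => mj.
- have -> : (m < j.+1)%N by lia.
  by rewrite nth_mkseq.
- by have -> : (m < j.+1)%N = false by lia.
- by rewrite mj ltnSn.
Qed.

Lemma prefix_piece (g : nat -> bool) j b (u : seq bool) s :
  prefixb (rcons (mkseq g j) b ++ u) s <->
  [/\ forall m, (m < j)%N -> s m = g m, s j = b &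
      forall m, (m < size u)%N -> s (j.+1 + m)%N = nth false u m].
Proof.
split.
  move/prefixbP; rewrite size_cat size_rcons size_mkseq => H; split.
  - move=> m mj; rewrite -H; last by lia.
    by rewrite nth_piece mj.
  - by rewrite -H ?nth_piece ?ltnn ?eqxx //; lia.
  - move=> m mu; rewrite -H; last by lia.
    rewrite nth_piece; have -> : (j.+1 + m < j)%N = false by lia.
    have -> : (j.+1 + m == j) = false by lia.
    by rewrite addKn.
case=> H1 H2 H3; apply/prefixbP; rewrite size_cat size_rcons size_mkseq => m mS.
rewrite nth_piece; case: (ltngtP m j) => mj.
- by rewrite H1.
- rewrite -(subnKC mj) H3 //; last by lia.
  by rewrite subnKC.
- by rewrite mj H2.
Qed.

Lemma prefix_piece0 (g : nat -> bool) j b s :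
  prefixb (rcons (mkseq g j) b) s <->
  (forall m, (m < j)%N -> s m = g m) /\ s j = b.
Proof.
rewrite -[rcons _ _]cats0 prefix_piece; split; first by case.
by case=> h1 h2; split.
Qed.

Definition des (s : cantor_space) N M (c : bool) (t : ('I_N + option (M.-tuple bool))%type)
  : seq bool :=
  match t with
  | inl j => rcons (mkseq s j) (~~ s j)
  | inr None => rcons (mkseq s N) c
  | inr (Some u) => rcons (mkseq s N) (~~ c) ++ u
  end.

Lemma des_uniq s N M c s' t1 t2 :
  prefixb (@des s N M c t1) s' -> prefixb (@des s N M c t2) s' -> t1 = t2.
Proof.
have nb : forall a b : bool, a = ~~ b -> a = b -> False by do 2 case.
case: t1 => [j1|[u1|]]; case: t2 => [j2|[u2|]] /=;
  rewrite ?prefix_piece0 ?prefix_piece.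
- move=> [A1 B1] [A2 B2]; congr inl; apply: val_inj => /=.
  case: (ltngtP j1 j2) => // jj; exfalso.
    by apply: (nb _ _ B1); apply: A2.
  by apply: (nb _ _ B2); apply: A1.
- by move=> [A1 B1] [A2 B2 _]; exfalso; apply: (nb _ _ B1); apply: A2.
- by move=> [A1 B1] [A2 B2]; exfalso; apply: (nb _ _ B1); apply: A2.
- by move=> [A1 B1 _] [A2 B2]; exfalso; apply: (nb _ _ B2); apply: A1.
- move=> [_ _ C1] [_ _ C2]; congr (inr (Some _)); apply: val_inj => /=.
  apply: (@eq_from_nth _ false); first by rewrite !size_tuple.
  by move=> m; rewrite size_tuple => mM; rewrite -C1 ?size_tuple // C2 ?size_tuple.
- by move=> [_ B1 _] [_ B2]; exfalso; apply: (nb _ _ B1).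
- by move=> [A1 B1] [A2 B2]; exfalso; apply: (nb _ _ B2); apply: A1.
- by move=> [_ B1] [_ B2 _]; exfalso; apply: (nb _ _ B2).
- by [].
Qed.

Lemma des_code s N M c : code (@des s N M c).
Proof.
move=> s'.
suff [t Ht] : exists t, prefixb (@des s N M c t) s'.
  by exists t; split => // t' Ht'; apply: des_uniq Ht Ht'.
case: (pselect (exists j, (j < N)%N /\ s' j != s j)) => [Ex|NEx].
  have Ex' : exists j, (j < N)%N && (s' j != s j).
    by case: Ex => j [h1 h2]; exists j; rewrite h1 h2.
  case: (ex_minnP Ex') => j /andP[jN sj] jmin.
  exists (inl (Ordinal jN)); rewrite /= prefix_piece0; split.
    move=> m mj; have mN := ltn_trans mj jN; apply/eqP; move: mj; apply: contraTT => hm.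
    by rewrite -leqNgt; apply: jmin; rewrite hm mN.
  by move: sj; case: (s' j); case: (s j).
have agree : forall m, (m < N)%N -> s' m = s m.
  move=> m mN; case: (eqVneq (s' m) (s m)) => // hm; exfalso.
  by apply: NEx; exists m; split.
case E: (s' N == c).
  by exists (inr None); rewrite /= prefix_piece0; split => //; apply/eqP.
pose u : M.-tuple bool := @Tuple M bool (mkseq (fun m => s' (N.+1 + m)%N) M)
   (introT eqP (size_mkseq _ _)).
exists (inr (Some u)); rewrite /= prefix_piece; split => //.
  by move/negbT: E; case: (s' N); case: c.
by move=> m; rewrite size_tuple => mM; rewrite /= nth_mkseq.
Qed.

Lemma code_inv (T : finType) (D : T -> seq bool) (sg : T -> T) :
  code D -> involutive sg -> code (D \o sg).
Proof.
move=> cD sgK s; have [t [Ht U]] := cD s.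
exists (sg t); split; first by rewrite /= sgK.
by move=> t' Ht'; rewrite (U _ Ht') sgK.
Qed.

Definition tau (s : cantor_space) N M : M.-tuple bool :=
  @Tuple M bool (mkseq (fun m => s (N.+1 + m)%N) M) (introT eqP (size_mkseq _ _)).

Definition sgm N M (tu : M.-tuple bool) (t : ('I_N + option (M.-tuple bool))%type) :
  ('I_N + option (M.-tuple bool))%type :=
  match t with
  | inl j => inl j
  | inr None => inr (Some tu)
  | inr (Some u) => if u == tu then inr None else inr (Some u)
  end.

Lemma sgmK N M tu : involutive (@sgm N M tu).
Proof.
case=> [j|[u|]] //=.
  by case: eqP => [->|ne] //=; case: eqP.
by rewrite eqxx.
Qed.

Definition ranD (s : cantor_space) N M :=
  @des s N M (~~ s N) \o @sgm N M (tau s N M).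

Arguments ranD : clear implicits.
Arguments tau : clear implicits.

Lemma ranD_code s N M : code (ranD s N M).
Proof. exact: (code_inv (@des_code _ _ _ _) (@sgmK _ _ _)). Qed.

Lemma ranD_None s N M :
  ranD s N M (inr None) = rcons (mkseq s N) (s N) ++ tau s N M.
Proof. by rewrite /ranD /= negbK. Qed.

Lemma pre_big (s : cantor_space) N M :
  prefixb (rcons (mkseq s N) (s N) ++ tau s N M) s.
Proof.
apply/prefix_piece; split => //.
by move=> m; rewrite size_tuple => mM; rewrite /= nth_mkseq.
Qed.

Lemma pre_small (s : cantor_space) N : prefixb (rcons (mkseq s N) (s N)) s.
Proof. by apply/prefix_piece0. Qed.

Lemma size_small (s : cantor_space) N : size (rcons (mkseq s N) (s N)) = N.+1.
Proof. by rewrite size_rcons size_mkseq. Qed.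

Lemma size_big (s : cantor_space) N M :
  size (rcons (mkseq s N) (s N) ++ tau s N M) = (N.+1 + M)%N.
Proof. by rewrite size_cat size_small size_tuple. Qed.

Lemma fix_pos (s : cantor_space) N M :
  (forall k, (N <= k)%N -> s (k + M)%N = s k) ->
  concat (rcons (mkseq s N) (s N) ++ tau s N M)
    (shift s (size (rcons (mkseq s N) (s N)))) = s.
Proof.
move=> P; apply: funext => m; rewrite /concat size_big size_small /shift.
case: ifP => mb.
  by move/prefixbP: (pre_big s N M); apply; rewrite size_big.
move/negbT: mb; rewrite -leqNgt => mb.
have -> : (m - (N.+1 + M) + N.+1 = m - M)%N by lia.
by rewrite -P ?subnK //; lia.
Qed.

Lemma fix_neg (s : cantor_space) N M :
  (forall k, (N <= k)%N -> s (k + M)%N = s k) ->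
  concat (rcons (mkseq s N) (s N))
    (shift s (size (rcons (mkseq s N) (s N) ++ tau s N M))) = s.
Proof.
move=> P; apply: funext => m; rewrite /concat size_big size_small /shift.
case: ifP => mb.
  by move/prefixbP: (pre_small s N); apply; rewrite size_small.
move/negbT: mb; rewrite -leqNgt => mb.
have -> : (m - N.+1 + (N.+1 + M) = m + M)%N by lia.
by rewrite P //; lia.
Qed.
Lemma realize n (x : Cn n) (d : 'I_n -> int) :
  (forall i, per (x i) `|d i|%N) ->
  exists f, in_Fix_nV x f /\ exists a b, Rel x f a b /\
    forall i, ((a i)%:Z - (b i)%:Z)%R = d i.
Proof.
move=> Hper.
pose N i := proj1_sig (cid (Hper i)).
have NP : forall i k, (N i <= k)%N -> x i (k + `|d i|)%N = x i k.
  by move=> i; exact: (proj2_sig (cid (Hper i))).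
pose M i := `|d i|%N.
pose T : 'I_n -> finType := fun i => ('I_(N i) + option ((M i).-tuple bool))%type.
pose D : forall i, T i -> seq bool := fun i => @des (x i) (N i) (M i) (x i (N i)).
pose R : forall i, T i -> seq bool := fun i => ranD (x i) (N i) (M i).
pose dom : forall i, T i -> seq bool := fun i => if (0 <= d i)%R then D i else R i.
pose ran : forall i, T i -> seq bool := fun i => if (0 <= d i)%R then R i else D i.
have cD : forall i, code (D i) by move=> i; exact: des_code.
have cR : forall i, code (R i) by move=> i; exact: ranD_code.
have cdom : forall i, code (dom i) by move=> i; rewrite /dom; case: ifP.
have cran : forall i, code (ran i) by move=> i; rewrite /ran; case: ifP.
pose t0 : forall i, T i := fun i => inr None.
have RN : forall i, R i (t0 i) = rcons (mkseq (x i) (N i)) (x i (N i)) ++ tau (x i) (N i) (M i).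
  by move=> i; rewrite /R ranD_None.
have DN : forall i, D i (t0 i) = rcons (mkseq (x i) (N i)) (x i (N i)) by [].
have Hrel : Rel x (nmap dom ran) (fun i => size (ran i (t0 i))) (fun i => size (dom i (t0 i))).
  apply: nmap_rel => // i; rewrite /dom /ran; case: ifP => _.
  - by rewrite DN pre_small.
  - by rewrite RN pre_big.
  - by rewrite DN RN; apply: fix_pos; apply: NP.
  - by rewrite DN RN; apply: fix_neg; apply: NP.
exists (nmap dom ran); split.
  split; first exact: nmap_nV.
  exact: rel_fix Hrel.
do 2 eexists; split; first exact: Hrel.
move=> i /=; rewrite /dom /ran; case: ifP => h.
  rewrite RN DN size_big size_small /M.
  have -> : d i = ((`|d i|%N)%:Z)%R by rewrite gez0_abs.
  lia.
rewrite RN DN size_big size_small /M.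
have -> : d i = (- (`|d i|%N)%:Z)%R by rewrite ltz0_abs ?opprK // ltNge h.
lia.
Qed.

Local Open Scope ring_scope.

Theorem mainTheorem3 (n : nat) (x : Cn n) :
  (0 < n)%N -> germ_group_iso_Zk x (num_rational x).
Proof.
move=> _.
set S := [set i : 'I_n | `[< rational_pt (x i) >]].
pose phi (f : Cn n -> Cn n) : 'rV[int]_(num_rational x) :=
  (\row_(j < #|S|) ((dvec x f (enum_val j)) %/ (pp (x (enum_val j)))%:Z)%Z)%R.
have ratS : forall j : 'I_#|S|, rational_pt (x (enum_val j)).
  by move=> j; have := enum_valP j; rewrite inE => /asboolP.
have pp0 : forall i, (pp (x i))%:Z != 0%R by move=> i; rewrite eqz_nat -lt0n pp_gt0.
exists phi; split.
- move=> f g /rel_of_Fix [a [b Hf]] /rel_of_Fix [a' [b' Hg]]; split.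
    move=> E; apply: (rel_germ Hf Hg) => i.
    case: (boolP (i \in S)) => Si.
      have := congr1 (fun M : 'rV[int]__ => M 0 (enum_rank_in Si i)) E.
      rewrite /phi !mxE enum_rankK_in // !(dvecE Hf) !(dvecE Hg).
      move=> e.
      have r : rational_pt (x i) by move: Si; rewrite /S inE => /asboolP.
      have := divzK (rel_dvd Hf r); have := divzK (rel_dvd Hg r).
      move=> e1 e2; rewrite e in e2.
      have E3 : ((a i)%:Z - (b i)%:Z = (a' i)%:Z - (b' i)%:Z) by rewrite -e1 -e2.
      lia.
    have r : ~ rational_pt (x i).
      by move=> r; apply: (negP Si); rewrite /S inE; apply/asboolP.
    by rewrite (rel_nonrat Hf r) (rel_nonrat Hg r) addnC.
  move=> G; apply/matrixP => i j; rewrite /phi !mxE (dvecE Hf) (dvecE Hg).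
  have := rel_uniq Hf Hg G (enum_val j) => e.
  by rewrite (int_diff_eq e).
- move=> f g /rel_of_Fix [a [b Hf]] /rel_of_Fix [a' [b' Hg]].
  have Hfg := rel_comp Hf Hg.
  apply/matrixP => i j; rewrite /phi !mxE (dvecE Hf) (dvecE Hg) (dvecE Hfg).
  rewrite -divzDl; last exact: (rel_dvd Hf (ratS j)).
  congr (_ %/ _)%Z; apply: int_diff_eq2.
- move=> v.
  pose d (i : 'I_n) : int :=
    if [pick j : 'I_#|S| | enum_val j == i] is Some j then (v 0 j * (pp (x i))%:Z)%R
    else 0%R.
  have [f [Ff [a [b [Hf Hd]]]]] : exists f, in_Fix_nV x f /\ exists a b, Rel x f a b /\
    forall i, ((a i)%:Z - (b i)%:Z)%R = d i.
    apply: realize => i; rewrite /d; case: pickP => [j /eqP ji|_].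
      have [_ Hp _] := pp_spec (ratS j); rewrite ji in Hp.
      rewrite abszM absz_nat; exact: per_mulr.
    by exists 0%N => k _; rewrite addn0.
  exists f => //; apply/matrixP => i j; rewrite /phi !mxE (dvecE Hf) Hd /d.
  rewrite [i]ord1.
  case: pickP => [j' /eqP /enum_val_inj -> | /(_ j)]; last by rewrite eqxx.
  by rewrite mulzK.
Qed.
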